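(* Define, for $(\Omega,\beta_1,\beta_2)\in(-\pi,\pi]\times(0,\pi)\times(0,\pi)$ (with $\Omega$ understood modulo $2\pi$), $$\mathfrak{L}_1(\Omega,\beta_1,\beta_2)=\tfrac18\sin^2\beta_2\,(3+\cos 2\beta_1)+\tfrac12\sin^2\beta_1\cos^2\beta_2-\tfrac12\cos\Omega\,\sin\beta_1\sin^2\tfrac{\beta_1}{2}\,\sin 2\beta_2 .$$ Then $\mathfrak{L}_1$ has exactly the following eight critical points (points where $\nabla\mathfrak{L}_1=0$), with the indicated values and types: 1. $(\pm\tfrac{\pi}{2},\tfrac{\pi}{2},\tfrac{\pi}{2})$: value $1/4$, saddle points. 2. $\big(\pi,\arccos\tfrac{-1+\sqrt5}{2},\ \pi-\tfrac12\arctan(2\sqrt{2+\sqrt5})\big)$ and $\big(0,\arccos\tfrac{-1+\sqrt5}{2},\ \tfrac12\arctan(2\sqrt{2+\sqrt5})\big)$: value $1/4$, saddle points. 3. $\big(\pi,\arccos\tfrac{1+\sqrt6}{5},\ \tfrac12\arccos\tfrac{1}{1-\sqrt6}\big)$ and $\big(0,\arccos\tfrac{1+\sqrt6}{5},\ \pi-\tfrac12\arccos\tfrac{1}{1-\sqrt6}\big)$: value $\tfrac{3}{50}(9-\sqrt6)\approx0.393$, saddle points. 4. $\big(\pi,\arccos\tfrac{1-\sqrt6}{5},\ \tfrac12\arccos\tfrac{1}{1+\sqrt6}\big)$ and $\big(0,\arccos\tfrac{1-\sqrt6}{5},\ \pi-\tfrac12\arccos\tfrac{1}{1+\sqrt6}\big)$: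 value $\tfrac{3}{50}(9+\sqrt6)\approx0.687$, global maxima of $\mathfrak{L}_1$ on its domain.
   Context: A saddle point is a critical point at which the Hessian is indefinite (has both a strictly positive and a strictly negative eigenvalue). Motivation (not needed for the claim): $\mathfrak{L}_1(\alpha_1+\gamma_2,\beta_1,\beta_2)$ equals the measurement-assisted transition probability $\langle 2|U_2\,\mathcal M_1(U_1|1\rangle\langle1|U_1^\dagger)U_2^\dagger|2\rangle$ with $U_i=e^{-i\alpha_iJ_z}e^{-i\beta_iJ_y}e^{-i\gamma_iJ_z}$, where $J_y,J_z$ are the spin-1 matrices and $\mathcal M_1(\rho)=P\rho P+(\mathbb I-P)\rho(\mathbb I-P)$, $P=|1\rangle\langle1|$. *)

(* Defs.v *)
From Stdlib Require Import Reals.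
From Coquelicot Require Import Coquelicot.
Open Scope R_scope.

Definition L1 (O b1 b2 : R) : R :=
  1/8 * (sin b2)^2 * (3 + cos (2 * b1))
  + 1/2 * (sin b1)^2 * (cos b2)^2
  - 1/2 * cos O * sin b1 * (sin (b1 / 2))^2 * sin (2 * b2).

Definition pt := (R * R * R)%type.

Definition coord (p : pt) (i : nat) : R :=
  match i with 0%nat => fst (fst p) | 1%nat => snd (fst p) | _ => snd p end.

Definition upd (p : pt) (i : nat) (t : R) : pt :=
  match i with
  | 0%nat => (t, snd (fst p), snd p)
  | 1%nat => (fst (fst p), t, snd p)
  | _ => (fst (fst p), snd (fst p), t)
  end.

Definition F (p : pt) : R := L1 (fst (fst p)) (snd (fst p)) (snd p).

Definition partial (i : nat) (f : pt -> R) (p : pt) : R :=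
  Derive (fun t => f (upd p i t)) (coord p i).

Definition critical (f : pt -> R) (p : pt) : Prop :=
  forall i : nat, (i < 3)%nat -> partial i f p = 0.

Definition hessian (f : pt -> R) (p : pt) (i j : nat) : R :=
  partial i (partial j f) p.

Definition hess_eigenvalue (f : pt -> R) (p : pt) (lam : R) : Prop :=
  exists w : nat -> R,
    (exists k : nat, (k < 3)%nat /\ w k <> 0) /\
    forall i : nat, (i < 3)%nat ->
      hessian f p i 0 * w 0%nat + hessian f p i 1 * w 1%nat
      + hessian f p i 2 * w 2%nat = lam * w i.

Definition saddle (f : pt -> R) (p : pt) : Prop :=
  critical f p /\
  (exists lam, 0 < lam /\ hess_eigenvalue f p lam) /\
  (exists lam, lam < 0 /\ hess_eigenvalue f p lam).

Definition dom (p : pt) : Prop :=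
  - PI < fst (fst p) <= PI /\ 0 < snd (fst p) < PI /\ 0 < snd p < PI.

Definition P1a : pt := (PI/2, PI/2, PI/2).
Definition P1b : pt := (- (PI/2), PI/2, PI/2).
Definition P2a : pt :=
  (PI, acos ((-1 + sqrt 5) / 2), PI - 1/2 * atan (2 * sqrt (2 + sqrt 5))).
Definition P2b : pt :=
  (0, acos ((-1 + sqrt 5) / 2), 1/2 * atan (2 * sqrt (2 + sqrt 5))).
Definition P3a : pt :=
  (PI, acos ((1 + sqrt 6) / 5), 1/2 * acos (1 / (1 - sqrt 6))).
Definition P3b : pt :=
  (0, acos ((1 + sqrt 6) / 5), PI - 1/2 * acos (1 / (1 - sqrt 6))).
Definition P4a : pt :=
  (PI, acos ((1 - sqrt 6) / 5), 1/2 * acos (1 / (1 + sqrt 6))).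
Definition P4b : pt :=
  (0, acos ((1 - sqrt 6) / 5), PI - 1/2 * acos (1 / (1 + sqrt 6))).

(* Main.v *)
Require Import Defs.
From Stdlib Require Import Reals Lra Lia Nsatz.
From Coquelicot Require Import Coquelicot.
Open Scope R_scope.

Definition qf x := 2 + 3*x - 6*x^2 - 5*x^3.
Definition Cn x := -x*(1-3*x^2).
Definition Kx x := 2*x*(1-x^2)*(1-x).
Definition pH11 x := 2*(2*x^2-1)*(qf x + 3*Cn x) - 2*(4*x-1)*Kx x.
Definition pH22 x := -4*Cn x*(1-3*x^2) + 8*(1-x)*Kx x.
Definition pH12 x := -12*x*Kx x - 4*Cn x*(1-x)*(1+2*x).
Definition pV x := (3-x^2)*qf x + Cn x*(1-3*x^2) - 2*(1-x)*Kx x.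

Ltac ns := cbn [pow] in *; nsatz.

Lemma quadA x : x^2+x-1 = 0 -> qf x = 1 - x /\ Cn x * (2*x+3) = qf x /\
  pH11 x * pH22 x - pH12 x * pH12 x = 16*(15 - 25*x) /\ pV x = 2 - 2*x.
Proof.
  intro H. unfold pH11, pH22, pH12, pV, Cn, Kx, qf.
  repeat split; ns.
Qed.
Lemma quadB x : 5*x^2-2*x-1 = 0 -> 5 * qf x = 2-6*x /\ Cn x * (2-5*x) = qf x /\
  78125 * (pH11 x * pH22 x - pH12 x * pH12 x) = 64 * (25056 - 51048*x) /\ 125 * pV x = 312-696*x.
Proof.
  intro H. unfold pH11, pH22, pH12, pV, Cn, Kx, qf.
  repeat split; ns.
Qed.

Lemma alg_pt x s c C S : s*s = 1 - x*x -> c*c = 1 -> C * qf x = Cn x ->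
  S * qf x = 2*c*x*s*(1-x) ->
  (2*x*s + 6*x*s*C - 2*c*S*(x*(1-x)+s*s)) * qf x = 0 /\
  (-2*S*(1-3*x^2) - 4*c*s*(1-x)*C) * qf x = 0 /\
  (3 - x^2 + C*(1-3*x^2) - 2*c*s*(1-x)*S) * qf x = pV x /\
  qf x * (2*(x^2-s^2)*(1+3*C) - 2*c*S*s*(4*x-1)) = pH11 x /\
  qf x * (-4*C*(1-3*x^2) + 8*c*s*(1-x)*S) = pH22 x /\
  qf x * (-12*x*s*S - 4*c*C*(x*(1-x)+s*s)) = c * pH12 x.
Proof.
  intros H1 H2 H3 H4. unfold pH11, pH22, pH12, pV, Kx in *. unfold Cn, qf in *.
  repeat split; ns.
Qed.

Lemma alg_max x s f C S r : r*r = 6 -> 0 <= r -> s*s = 1 - x*x -> C*C+S*S = 1 -> f*f <= 1 ->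
  (3 - x^2 + C*(1-3*x^2) - 2*f*s*(1-x)*S) / 8 <= 3/50 * (9 + r).
Proof.
  intros Hr Hr0 Hs HCS Hf.
  assert (Hr1 : 2.449 < r) by nra.
  assert (Hx : -1 <= x <= 1) by (split; nra).
  set (A := 1 - 3*x^2). set (B := -2*f*s*(1-x)).
  set (M := (33+12*r)/25 + x^2).
  assert (HM : 0 < M) by (unfold M; nra).
  assert (Hid : (33+12*r+25*x^2)^2 - 625*(1-3*x^2)^2 - 2500*(1-x*x)*(1-x)^2 =
     (5*x-1+r)^2 * (-100*x^2 + (-240+40*r)*x + 52 + 128*r)) by (clear - Hr; ns).
  assert (Hm : 0 <= -100*x^2 + (-240+40*r)*x + 52 + 128*r).
  { replace (-100*x^2 + (-240+40*r)*x + 52 + 128*r) with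
      (((1-x)*(192+88*r) + (1+x)*(-288+168*r))/2 + 100*(1-x^2)) by field.
    assert (0 <= (1-x)*(192+88*r)) by (apply Rmult_le_pos; lra).
    assert (0 <= (1+x)*(-288+168*r)) by (apply Rmult_le_pos; lra).
    nra. }
  assert (Hh : A^2 + 4*(1-x*x)*(1-x)^2 <= M^2).
  { assert (0 <= (5*x-1+r)^2 * (-100*x^2 + (-240+40*r)*x + 52 + 128*r))
      by (apply Rmult_le_pos; [apply pow2_ge_0|exact Hm]).
    assert (625*(M^2 - A^2 - 4*(1-x*x)*(1-x)^2) = (5*x-1+r)^2 * (-100*x^2 + (-240+40*r)*x + 52 + 128*r))
      by (unfold M, A; rewrite <- Hid; field).
    lra. }
  assert (HB : B^2 <= 4*(1-x*x)*(1-x)^2).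
  { unfold B. rewrite <- Hs.
    replace ((-2*f*s*(1-x))^2) with (4*(f*f)*(s*s)*(1-x)^2) by ring.
    assert (HK : 0 <= 4*(s*s)*(1-x)^2).
    { apply Rmult_le_pos; [|apply pow2_ge_0]. assert (0 <= s*s) by apply Rle_0_sqr. lra. }
    replace (4*(f*f)*(s*s)*(1-x)^2) with ((f*f)*(4*(s*s)*(1-x)^2)) by ring.
    assert (0 <= f*f) by apply Rle_0_sqr.
    nra. }
  assert (HC : (C*A + S*B)^2 <= A^2 + B^2).
  { assert ((A^2+B^2)*(C*C+S*S) - (C*A+S*B)^2 = (A*S - B*C)^2) by ring.
    rewrite HCS in H. pose proof (pow2_ge_0 (A*S - B*C)). lra. }
  assert (C*A + S*B <= M).
  { destruct (Rle_or_lt (C*A+S*B) M) as [Hl|Hl]; auto. exfalso.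
    assert (M*M < (C*A+S*B)*(C*A+S*B)) by (apply Rmult_le_0_lt_compat; lra).
    simpl in HC, Hh. lra. }
  unfold A, B, M in *. lra.
Qed.
Lemma crit_alg x s c C S :
  s*s = 1 - x*x -> 0 < s -> -1 < x < 1 -> c*c = 1 -> C*C+S*S = 1 ->
  2*x*s + 6*x*s*C - 2*c*S*(x*(1-x)+s*s) = 0 ->
  -2*S*(1-3*x^2) - 4*c*s*(1-x)*C = 0 ->
  qf x <> 0 /\ C * qf x = -x*(1-3*x^2) /\ S * qf x = 2*c*x*s*(1-x) /\
  (x^2+x-1)*(5*x^2-2*x-1) = 0.
Proof.
  intros Hs Hs0 Hx Hc HCS E1 E2. unfold qf.
  assert (A1 : s * ((2 + 3*x - 6*x^2 - 5*x^3) * C + x*(1-3*x^2)) = 0) by (clear - Hs Hc E1 E2; cbn [pow] in *; nsatz).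
  assert (A2 : s * ((2 + 3*x - 6*x^2 - 5*x^3) * S - 2*c*x*s*(1-x)) = 0) by (clear - Hs Hc E1 E2; cbn [pow] in *; nsatz).
  apply Rmult_integral in A1; destruct A1 as [A1|A1]; [lra|].
  apply Rmult_integral in A2; destruct A2 as [A2|A2]; [lra|].
  set (q := 2 + 3*x - 6*x^2 - 5*x^3) in *.
  assert (QC : C * q = -x*(1-3*x^2)) by lra.
  assert (QS : S * q = 2*c*x*s*(1-x)) by lra.
  assert (Hq : q <> 0).
  { intro Hq. rewrite Hq in QC, QS.
    assert (Hx0 : c * x * s * (1-x) = 0) by lra.
    assert (c <> 0) by (intro; subst; lra).
    assert (x = 0).
    { apply Rmult_integral in Hx0; destruct Hx0 as [Hh|Hh]; [|lra].
      apply Rmult_integral in Hh; destruct Hh as [Hh|Hh]; [|lra].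
      apply Rmult_integral in Hh; destruct Hh as [Hh|Hh]; [lra|lra]. }
    subst x. unfold q in Hq. lra. }
  repeat split; try assumption.
  assert (K : (C*q)^2 + (S*q)^2 = q^2)
    by (transitivity (q^2*(C*C+S*S)); [ring| rewrite HCS; ring]).
  rewrite QC, QS in K.
  assert (A3 : 4*(1+x)^2*((x^2+x-1)*(5*x^2-2*x-1)) = 0).
  { replace (4*(1+x)^2*((x^2+x-1)*(5*x^2-2*x-1))) with
      (q^2 - ((-x*(1-3*x^2))^2 + 4*x^2*(1-x*x)*(1-x)^2)) by (unfold q; ring).
    rewrite <- K, <- Hs.
    replace ((2*c*x*s*(1-x))^2) with (4*(c*c)*x^2*(s*s)*(1-x)^2) by ring.
    rewrite Hc. ring. }
  apply Rmult_integral in A3; destruct A3 as [A3|A3]; [nra|exact A3].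
Qed.

Lemma target_S x s c y :
  s*s = 1 - x*x -> 0 < s -> x < 1 -> c*c = 1 -> qf x <> 0 ->
  (x^2+x-1)*(5*x^2-2*x-1) = 0 ->
  cos y * qf x = -x*(1-3*x^2) -> 0 < sin y * (c*x*qf x) ->
  sin y * qf x = 2*c*x*s*(1-x).
Proof.
  intros Hs Hs0 Hx Hc Hq Hr HC Hsg.
  set (q := qf x) in *. set (T := 2*c*x*s*(1-x)).
  assert (K : (sin y * q)^2 = T^2).
  { assert (E : (sin y * q)^2 = q^2 - (cos y * q)^2).
    { pose proof (sin2_cos2 y). unfold Rsqr in H.
      transitivity (q^2 * (sin y * sin y)); [ring|].
      replace (sin y * sin y) with (1 - cos y * cos y) by lra. ring. }
    rewrite E, HC. unfold T.
    replace ((2*c*x*s*(1-x))^2) with (4*(c*c)*x^2*(s*s)*(1-x)^2) by ring.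
    rewrite Hc, Hs. unfold q, qf.
    replace (((2 + 3 * x - 6 * x ^ 2 - 5 * x ^ 3)) ^ 2 - (- x * (1 - 3 * x ^ 2)) ^ 2)
      with (4*x^2*(1-x*x)*(1-x)^2 + 4*(1+x)^2*((x^2+x-1)*(5*x^2-2*x-1))) by ring.
    rewrite Hr. ring. }
  assert (K2 : (sin y * q - T) * (sin y * q + T) = 0) by nra.
  apply Rmult_integral in K2. destruct K2 as [K2|K2]; [lra|].
  exfalso. assert (sin y * q = -T) by lra.
  assert (sin y * (c*x*q) = -2*(c*c)*x^2*s*(1-x)).
  { replace (sin y * (c*x*q)) with (c*x*(sin y * q)) by ring. rewrite H. unfold T. ring. }
  rewrite Hc in H0. assert (0 <= x^2*s*(1-x)). { apply Rmult_le_pos; [apply Rmult_le_pos|]; nra. }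
  lra.
Qed.
Definition G (O a b : R) : R :=
  (3 - cos a ^ 2 + cos (2*b) * (1 - 3 * cos a ^ 2)
   - 2 * cos O * sin a * (1 - cos a) * sin (2*b)) / 8.

Lemma sin_half_sq a : sin (a/2) ^ 2 = (1 - cos a) / 2.
Proof. replace a with (2*(a/2)) at 2 by field. rewrite cos_2a_sin. field. Qed.
Lemma sin_sq a : sin a ^ 2 = 1 - cos a ^ 2.
Proof. pose proof (sin2_cos2 a). unfold Rsqr in H. nra. Qed.
Lemma sin_sq2 b : sin b ^ 2 = (1 - cos (2*b)) / 2.
Proof. rewrite cos_2a_sin. field. Qed.
Lemma cos_sq2 b : cos b ^ 2 = (1 + cos (2*b)) / 2.
Proof. rewrite cos_2a_cos. field. Qed.

Lemma L1_G O a b : L1 O a b = G O a b.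
Proof.
  unfold L1, G. rewrite sin_half_sq, (sin_sq a), (sin_sq2 b), (cos_sq2 b), (cos_2a_cos a). field.
Qed.

Definition D0 O a b := sin O * sin a * (1 - cos a) * sin (2*b) / 4.
Definition D1 O a b := (2*cos a*sin a + 6*cos a*sin a*cos (2*b)
   - 2*cos O*sin (2*b)*(cos a*(1-cos a) + sin a*sin a))/8.
Definition D2 O a b := (-2*sin (2*b)*(1-3*cos a^2) - 4*cos O*sin a*(1-cos a)*cos (2*b))/8.

Lemma pF0 O a b : partial 0 F (O,a,b) = D0 O a b.
Proof.
  unfold partial, F; simpl.
  rewrite (Derive_ext _ (fun t => G t a b)) by (intro; apply L1_G).
  apply is_derive_unique. unfold G, D0. auto_derive; [auto|]. field.
Qed.
Lemma pF1 O a b : partial 1 F (O,a,b) = D1 O a b.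
Proof.
  unfold partial, F; simpl.
  rewrite (Derive_ext _ (fun t => G O t b)) by (intro; apply L1_G).
  apply is_derive_unique. unfold G, D1. auto_derive; [auto|field].
Qed.
Lemma pF2 O a b : partial 2 F (O,a,b) = D2 O a b.
Proof.
  unfold partial, F; simpl.
  rewrite (Derive_ext _ (fun t => G O a t)) by (intro; apply L1_G).
  apply is_derive_unique. unfold G, D2. auto_derive; [auto|field].
Qed.

Lemma pF0' p : partial 0 F p = D0 (fst (fst p)) (snd (fst p)) (snd p).
Proof. destruct p as [[O a] b]; apply pF0. Qed.
Lemma pF1' p : partial 1 F p = D1 (fst (fst p)) (snd (fst p)) (snd p).
Proof. destruct p as [[O a] b]; apply pF1. Qed.
Lemma pF2' p : partial 2 F p = D2 (fst (fst p)) (snd (fst p)) (snd p).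
Proof. destruct p as [[O a] b]; apply pF2. Qed.

Ltac hess_tac pj :=
  unfold hessian, partial at 1; simpl;
  rewrite (Derive_ext _ _ _ (fun t => pj _)); simpl;
  apply is_derive_unique; unfold D0, D1, D2; auto_derive; [auto|field].

Lemma H00 O a b : hessian F (O,a,b) 0 0 = cos O * sin a*(1-cos a)*sin(2*b)/4.
Proof. hess_tac pF0'. Qed.
Lemma H10 O a b : hessian F (O,a,b) 1 0 = sin O * sin(2*b) * (cos a*(1-cos a) + sin a * sin a)/4.
Proof. hess_tac pF0'. Qed.
Lemma H20 O a b : hessian F (O,a,b) 2 0 = sin O * sin a*(1-cos a)*cos(2*b)/2.
Proof. hess_tac pF0'. Qed.
Lemma H01 O a b : hessian F (O,a,b) 0 1 = sin O*sin(2*b)*(cos a*(1-cos a)+sin a*sin a)/4.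
Proof. hess_tac pF1'. Qed.
Lemma H11 O a b : hessian F (O,a,b) 1 1 = (2*(cos a^2 - sin a^2)*(1+3*cos (2*b)) - 2*cos O*sin(2*b)*sin a*(4*cos a - 1))/8.
Proof. hess_tac pF1'. Qed.
Lemma H21 O a b : hessian F (O,a,b) 2 1 = (-12*cos a*sin a*sin(2*b) - 4*cos O*cos(2*b)*(cos a*(1-cos a)+sin a*sin a))/8.
Proof. hess_tac pF1'. Qed.
Lemma H02 O a b : hessian F (O,a,b) 0 2 = sin O*sin a*(1-cos a)*cos(2*b)/2.
Proof. hess_tac pF2'. Qed.
Lemma H12 O a b : hessian F (O,a,b) 1 2 = (-12*cos a*sin a*sin(2*b) - 4*cos O*cos(2*b)*(cos a*(1-cos a)+sin a*sin a))/8.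
Proof. hess_tac pF2'. Qed.
Lemma H22 O a b : hessian F (O,a,b) 2 2 = (-4*cos(2*b)*(1-3*cos a^2) + 8*cos O*sin a*(1-cos a)*sin(2*b))/8.
Proof. hess_tac pF2'. Qed.
Lemma sin0_eq y : -PI < y < PI -> sin y = 0 -> y = 0.
Proof.
  intros Hy Hs. destruct (Rtotal_order y 0) as [H|[H|H]]; auto.
  - pose proof (sin_lt_0_var y (proj1 Hy) H). lra.
  - pose proof (sin_gt_0 y H (proj2 Hy)). lra.
Qed.

Lemma b_eq b b' : 0 < b < PI -> 0 < b' < PI -> cos (2*b) = cos (2*b') ->
  sin (2*b) = sin (2*b') -> b = b'.
Proof.
  intros Hb Hb' Hc Hs.
  assert (E : cos (2*(b-b')) = 1).
  { replace (2*(b-b')) with (2*b - 2*b') by ring. rewrite cos_minus, <- Hc, <- Hs.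
    pose proof (sin2_cos2 (2*b)). unfold Rsqr in *. lra. }
  rewrite cos_2a_sin in E.
  assert (sin (b - b') = 0) by nra.
  apply sin0_eq in H; lra.
Qed.

Lemma sinO_cases O : -PI < O <= PI -> sin O = 0 -> O = 0 \/ O = PI.
Proof.
  intros HO Hs. destruct (Req_dec O PI) as [E|E]; [right; exact E|].
  left. apply sin0_eq; auto; lra.
Qed.

Lemma cosO_cases O : -PI < O <= PI -> cos O = 0 -> O = PI/2 \/ O = -(PI/2).
Proof.
  intros HO Hc. pose proof PI_RGT_0.
  destruct (Rtotal_order O (PI/2)) as [H1|[H1|H1]]; [|left; exact H1|].
  - destruct (Rtotal_order O (-(PI/2))) as [H2|[H2|H2]]; [|right; exact H2|].
    + pose proof (cos_lt_0 (-O)). rewrite cos_neg in H0. exfalso.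
      assert (cos O < 0) by (apply H0; lra). lra.
    + pose proof (cos_gt_0 O H2 H1). lra.
  - pose proof (cos_lt_0 O H1). assert (cos O < 0) by (apply H0; lra). lra.
Qed.

Lemma eig2 a b d : a*d - b*b < 0 ->
  (exists l, 0 < l /\ exists u v, (u <> 0 \/ v <> 0) /\ a*u+b*v = l*u /\ b*u+d*v = l*v) /\
  (exists l, l < 0 /\ exists u v, (u <> 0 \/ v <> 0) /\ a*u+b*v = l*u /\ b*u+d*v = l*v).
Proof.
  intros Hdet.
  destruct (Req_dec b 0) as [Hb|Hb].
  - subst b. assert (a*d < 0) by lra.
    destruct (Rlt_or_le 0 a) as [Ha|Ha].
    + assert (d < 0) by (destruct (Rle_or_lt 0 d); [nra|auto]). split.
      * exists a. split; auto. exists 1, 0. split; [left; lra|split; ring].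
      * exists d. split; auto. exists 0, 1. split; [right; lra|split; ring].
    + assert (a <> 0) by (intro; subst; lra). assert (a < 0) by lra.
      assert (0 < d) by (destruct (Rle_or_lt d 0); [nra|auto]). split.
      * exists d. split; auto. exists 0, 1. split; [right; lra|split; ring].
      * exists a. split; auto. exists 1, 0. split; [left; lra|split; ring].
  - set (D := sqrt ((a-d)^2 + 4*b^2)).
    assert (HD : D*D = (a-d)^2 + 4*b^2) by (apply sqrt_sqrt; nra).
    assert (HD0 : 0 <= D) by apply sqrt_pos.
    assert (HD1 : (a+d)^2 < D*D) by nra.
    assert (Habs : a+d < D /\ -(a+d) < D) by (split; nra).
    split.
    + exists ((a+d+D)/2). split. { lra. }
      exists b, ((a+d+D)/2 - a). split; [left; auto|]. split; [ring|].
      apply Rminus_diag_uniq. 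
      replace (b * b + d * ((a + d + D) / 2 - a) - (a + d + D) / 2 * ((a + d + D) / 2 - a))
        with ((a-d)^2/4 + b*b - D*D/4) by field. rewrite HD. field.
    + exists ((a+d-D)/2). split. { lra. }
      exists b, ((a+d-D)/2 - a). split; [left; auto|]. split; [ring|].
      apply Rminus_diag_uniq.
      replace (b * b + d * ((a + d - D) / 2 - a) - (a + d - D) / 2 * ((a + d - D) / 2 - a))
        with ((a-d)^2/4 + b*b - D*D/4) by field. rewrite HD. field.
Qed.

Lemma saddle12 p : critical F p -> hessian F p 0 1 = 0 -> hessian F p 0 2 = 0 ->
  hessian F p 2 1 = hessian F p 1 2 ->
  hessian F p 1 1 * hessian F p 2 2 - hessian F p 1 2 * hessian F p 1 2 < 0 -> saddle F p.
Proof.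
  intros Hc H01 H02 Hs Hd. destruct (eig2 _ _ _ Hd) as [[l [Hl [u [v [Hn [E1 E2]]]]]] [l' [Hl' [u' [v' [Hn' [E1' E2']]]]]]].
  split; [exact Hc|split].
  - exists l. split; auto. exists (fun k => match k with 1%nat => u | 2%nat => v | _ => 0 end).
    split. { destruct Hn; [exists 1%nat|exists 2%nat]; split; auto; lia. }
    intros i Hi. destruct i as [|[|[|i]]]; simpl; try lia.
    + rewrite H01, H02. ring.
    + rewrite <- E1. ring.
    + rewrite Hs, <- E2. ring.
  - exists l'. split; auto. exists (fun k => match k with 1%nat => u' | 2%nat => v' | _ => 0 end).
    split. { destruct Hn'; [exists 1%nat|exists 2%nat]; split; auto; lia. }
    intros i Hi. destruct i as [|[|[|i]]]; simpl; try lia.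
    + rewrite H01, H02. ring.
    + rewrite <- E1'. ring.
    + rewrite Hs, <- E2'. ring.
Qed.

Lemma saddle02 p : critical F p -> hessian F p 1 0 = 0 -> hessian F p 1 2 = 0 ->
  hessian F p 2 0 = hessian F p 0 2 ->
  hessian F p 0 0 * hessian F p 2 2 - hessian F p 0 2 * hessian F p 0 2 < 0 -> saddle F p.
Proof.
  intros Hc H10 H12 Hs Hd. destruct (eig2 _ _ _ Hd) as [[l [Hl [u [v [Hn [E1 E2]]]]]] [l' [Hl' [u' [v' [Hn' [E1' E2']]]]]]].
  split; [exact Hc|split].
  - exists l. split; auto. exists (fun k => match k with 0%nat => u | 2%nat => v | _ => 0 end).
    split. { destruct Hn; [exists 0%nat|exists 2%nat]; split; auto; lia. }
    intros i Hi. destruct i as [|[|[|i]]]; simpl; try lia.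
    + rewrite <- E1. ring.
    + rewrite H10, H12. ring.
    + rewrite Hs, <- E2. ring.
  - exists l'. split; auto. exists (fun k => match k with 0%nat => u' | 2%nat => v' | _ => 0 end).
    split. { destruct Hn'; [exists 0%nat|exists 2%nat]; split; auto; lia. }
    intros i Hi. destruct i as [|[|[|i]]]; simpl; try lia.
    + rewrite <- E1'. ring.
    + rewrite H10, H12. ring.
    + rewrite Hs, <- E2'. ring.
Qed.

Definition good (O a b x : R) := sin O = 0 /\ -PI < O <= PI /\ 0 < a < PI /\ cos a = x /\
  0 < b < PI /\ qf x <> 0 /\ (x^2+x-1)*(5*x^2-2*x-1) = 0 /\
  cos (2*b) * qf x = Cn x /\ sin (2*b) * qf x = 2*cos O*x*sin a*(1-x).

Lemma F_G O a b : F (O,a,b) = G O a b.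
Proof. unfold F; simpl. apply L1_G. Qed.

Lemma cosO_sq O : sin O = 0 -> cos O * cos O = 1.
Proof. intro H. pose proof (sin2_cos2 O). unfold Rsqr in H0. rewrite H in H0. lra. Qed.

Lemma sin_a_sq a : sin a * sin a = 1 - cos a * cos a.
Proof. pose proof (sin2_cos2 a). unfold Rsqr in H. lra. Qed.

Lemma good_facts O a b x : good O a b x ->
  critical F (O,a,b) /\ 8 * F (O,a,b) * qf x = pV x /\
  hessian F (O,a,b) 0 1 = 0 /\ hessian F (O,a,b) 0 2 = 0 /\
  hessian F (O,a,b) 2 1 = hessian F (O,a,b) 1 2 /\
  64 * (qf x)^2 * (hessian F (O,a,b) 1 1 * hessian F (O,a,b) 2 2
      - hessian F (O,a,b) 1 2 * hessian F (O,a,b) 1 2) = pH11 x * pH22 x - pH12 x * pH12 x.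
Proof.
  intros (Hs & HO & Ha & Hx & Hb & Hq & Hr & HC & HS). subst x.
  pose proof (cosO_sq O Hs) as Hc.
  destruct (alg_pt (cos a) (sin a) (cos O) (cos (2*b)) (sin (2*b)) (sin_a_sq a) Hc HC HS)
    as (E1 & E2 & EV & E11 & E22 & E12).
  split; [|split; [|split; [|split; [|split]]]].
  - intros i Hi. destruct i as [|[|[|i]]]; [| | |lia].
    + rewrite pF0. unfold D0. rewrite Hs. field.
    + rewrite pF1. unfold D1. apply (Rmult_eq_reg_r (qf (cos a))); auto.
      lra.
    + rewrite pF2. unfold D2. apply (Rmult_eq_reg_r (qf (cos a))); auto.
      lra.
  - rewrite F_G. unfold G. rewrite <- EV. field.
  - rewrite H01, Hs. field.
  - rewrite H02, Hs. field.
  - rewrite H21, H12. reflexivity.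
  - rewrite H11, H22, H12, <- E11, <- E22.
    replace (pH12 (cos a) * pH12 (cos a)) with (cos O * cos O * (pH12 (cos a) * pH12 (cos a))) by (rewrite Hc; ring).
    replace (cos O * cos O * (pH12 (cos a) * pH12 (cos a))) with ((cos O * pH12 (cos a)) * (cos O * pH12 (cos a))) by ring.
    rewrite <- E12. field.
Qed.

Lemma good_match O a b x O' a' b' : good O a b x -> good O' a' b' x -> O = O' ->
  (O,a,b) = (O',a',b').
Proof.
  intros (Hs & HO & Ha & Hx & Hb & Hq & Hr & HC & HS) (Hs' & HO' & Ha' & Hx' & Hb' & Hq' & Hr' & HC' & HS') E.
  subst O'.
  assert (a = a').
  { rewrite <- (acos_cos a), <- (acos_cos a'); try lra. rewrite Hx, Hx'. reflexivity. }
  subst a'.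
  assert (b = b'); [|subst; reflexivity].
  apply b_eq; auto.
  - apply (Rmult_eq_reg_r (qf x)); auto. rewrite HC, HC'. reflexivity.
  - apply (Rmult_eq_reg_r (qf x)); auto. rewrite HS, HS'. reflexivity.
Qed.

Lemma mk_good O x b : sin O = 0 -> -PI < O <= PI -> -1 < x < 1 -> qf x <> 0 ->
  (x^2+x-1)*(5*x^2-2*x-1) = 0 -> cos (2*b) * qf x = Cn x ->
  0 < sin (2*b) * (cos O * x * qf x) -> 0 < b < PI -> good O (acos x) b x.
Proof.
  intros Hs HO Hx Hq Hr HC Hsg Hb.
  assert (Hx' : -1 <= x <= 1) by lra.
  assert (Hca : cos (acos x) = x) by (apply cos_acos; auto).
  assert (Hsa : 0 < sin (acos x)).
  { rewrite sin_acos; auto. apply sqrt_lt_R0. unfold Rsqr. nra. }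
  pose proof (sin_a_sq (acos x)) as Hss. rewrite Hca in Hss.
  unfold good. repeat split; auto; try lra.
  - apply acos_bound_lt; auto.
  - apply acos_bound_lt; auto.
  - apply target_S; auto; try lra. apply cosO_sq; auto.
Qed.

Lemma sqrt5_facts : sqrt 5 * sqrt 5 = 5 /\ 2.236 < sqrt 5 < 2.2361.
Proof.
  assert (H : sqrt 5 * sqrt 5 = 5) by (apply sqrt_sqrt; lra).
  pose proof (sqrt_pos 5). split; auto. split; nra.
Qed.
Lemma sqrt6_facts : sqrt 6 * sqrt 6 = 6 /\ 2.4494 < sqrt 6 < 2.4495.
Proof.
  assert (H : sqrt 6 * sqrt 6 = 6) by (apply sqrt_sqrt; lra).
  pose proof (sqrt_pos 6). split; auto. split; nra.
Qed.

Definition xA := (-1 + sqrt 5)/2.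
Definition xB := (1 + sqrt 6)/5.
Definition xC := (1 - sqrt 6)/5.

Lemma xA_facts : xA^2 + xA - 1 = 0 /\ 0.618 < xA < 0.61805.
Proof.
  destruct sqrt5_facts as [H [H1 H2]]. unfold xA. split; [|lra].
  set (r := sqrt 5) in *. clear - H. nra.
Qed.
Lemma xB_facts : 5*xB^2 - 2*xB - 1 = 0 /\ 0.6898 < xB < 0.6899 /\ 2 - 5*xB = 1 - sqrt 6.
Proof.
  destruct sqrt6_facts as [H [H1 H2]]. unfold xB. split; [|split; [lra|field]].
  set (r := sqrt 6) in *. clear - H. nra.
Qed.
Lemma xC_facts : 5*xC^2 - 2*xC - 1 = 0 /\ -0.2899 < xC < -0.2898 /\ 2 - 5*xC = 1 + sqrt 6.
Proof.
  destruct sqrt6_facts as [H [H1 H2]]. unfold xC. split; [|split; [lra|field]].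
  set (r := sqrt 6) in *. clear - H. nra.
Qed.

Lemma root_cases x : -1 < x -> (x^2+x-1)*(5*x^2-2*x-1) = 0 -> x = xA \/ x = xB \/ x = xC.
Proof.
  intros Hx H. destruct sqrt5_facts as [H5 [H51 H52]]. destruct sqrt6_facts as [H6 [H61 H62]].
  apply Rmult_integral in H. destruct H as [H|H].
  - left. unfold xA.
    assert ((2*x+1 - sqrt 5)*(2*x+1+sqrt 5) = 0) by (cbn [pow] in *; nra).
    apply Rmult_integral in H0. destruct H0; lra.
  - right. unfold xB, xC.
    assert ((5*x-1 - sqrt 6)*(5*x-1+sqrt 6) = 0) by (cbn [pow] in *; nra).
    apply Rmult_integral in H0. destruct H0; [left|right]; lra.
Qed.

Definition kA := 2 * sqrt (2 + sqrt 5).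

Lemma kA_facts : 0 < kA /\ cos (atan kA) = 1 / (2 + sqrt 5) /\ 0 < sin (atan kA) /\
  0 < atan kA < PI/2.
Proof.
  destruct sqrt5_facts as [H5 [H51 H52]].
  assert (Hk : 0 < kA) by (unfold kA; apply Rmult_lt_0_compat; [lra|apply sqrt_lt_R0; lra]).
  assert (Hk2 : kA * kA = 4*(2 + sqrt 5)).
  { unfold kA. replace (2 * sqrt (2 + sqrt 5) * (2 * sqrt (2 + sqrt 5))) with
      (4 * (sqrt (2 + sqrt 5) * sqrt (2 + sqrt 5))) by ring. rewrite sqrt_sqrt; lra. }
  assert (Hs : sqrt (1 + kA²) = 2 + sqrt 5).
  { apply sqrt_lem_1. unfold Rsqr; nra. lra. unfold Rsqr. rewrite Hk2. nra. }
  split; auto. split; [rewrite cos_atan, Hs; reflexivity|]. split.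
  - rewrite sin_atan, Hs. apply Rdiv_lt_0_compat; lra.
  - pose proof (atan_bound kA). pose proof (atan_increasing 0 kA Hk). rewrite atan_0 in H0. lra.
Qed.

Lemma cos_2PI_minus t : cos (2*PI - t) = cos t.
Proof. rewrite cos_minus, cos_2PI, sin_2PI. ring. Qed.
Lemma sin_2PI_minus t : sin (2*PI - t) = - sin t.
Proof. rewrite sin_minus, cos_2PI, sin_2PI. ring. Qed.

Lemma acos_facts w : -1 < w < 1 -> cos (acos w) = w /\ 0 < sin (acos w) /\ 0 < acos w < PI.
Proof.
  intro Hw. split; [apply cos_acos; lra|]. split; [|apply acos_bound_lt; auto].
  rewrite sin_acos by lra. apply sqrt_lt_R0. unfold Rsqr. nra.
Qed.

Lemma good_saddle O a b x : good O a b x -> pH11 x * pH22 x - pH12 x * pH12 x < 0 ->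
  saddle F (O,a,b).
Proof.
  intros Hg Hd. pose proof Hg as Hg'. destruct Hg' as (_&_&_&_&_&Hq&_).
  destruct (good_facts O a b x Hg) as (Hc & _ & H01 & H02 & Hs & Hdet).
  apply saddle12; auto.
  assert (0 < 64 * qf x ^ 2) by (assert (0 < qf x ^2) by (apply pow2_gt_0; auto); lra).
  destruct (Rlt_or_le (hessian F (O, a, b) 1 1 * hessian F (O, a, b) 2 2 -
   hessian F (O, a, b) 1 2 * hessian F (O, a, b) 1 2) 0) as [Hl|Hl]; auto.
  exfalso. assert (0 <= 64 * qf x ^ 2 * (hessian F (O, a, b) 1 1 * hessian F (O, a, b) 2 2 -
   hessian F (O, a, b) 1 2 * hessian F (O, a, b) 1 2)) by (apply Rmult_le_pos; lra). lra.
Qed.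

Lemma good_value O a b x : good O a b x -> F (O,a,b) = pV x / (8 * qf x).
Proof.
  intros Hg. pose proof Hg as Hg'. destruct Hg' as (_&_&_&_&_&Hq&_).
  destruct (good_facts O a b x Hg) as (_ & HV & _).
  rewrite <- HV. field. auto.
Qed.

Lemma goodP2a : good PI (acos xA) (PI - 1/2 * atan kA) xA.
Proof.
  destruct xA_facts as [Hr Hb]. destruct (quadA xA Hr) as (Hq & HCn & _).
  destruct kA_facts as (Hk & Hck & Hsk & Hak). pose proof PI_RGT_0.
  destruct sqrt5_facts as [H5 [H51 H52]].
  apply mk_good.
  - apply sin_PI.
  - lra.
  - lra.
  - rewrite Hq. lra.
  - rewrite Hr. ring.
  - replace (2 * (PI - 1/2 * atan kA)) with (2*PI - atan kA) by field.
    rewrite cos_2PI_minus, Hck, <- HCn.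
    replace (2*xA+3) with (2 + sqrt 5) by (unfold xA; field). field. lra.
  - replace (2 * (PI - 1/2 * atan kA)) with (2*PI - atan kA) by field.
    rewrite sin_2PI_minus, cos_PI, Hq.
    replace (- sin (atan kA) * (-1 * xA * (1 - xA))) with (sin (atan kA) * (xA * (1 - xA))) by ring.
    apply Rmult_lt_0_compat; auto. apply Rmult_lt_0_compat; lra.
  - lra.
Qed.

Lemma goodP2b : good 0 (acos xA) (1/2 * atan kA) xA.
Proof.
  destruct xA_facts as [Hr Hb]. destruct (quadA xA Hr) as (Hq & HCn & _).
  destruct kA_facts as (Hk & Hck & Hsk & Hak). pose proof PI_RGT_0.
  destruct sqrt5_facts as [H5 [H51 H52]].
  apply mk_good.
  - apply sin_0.
  - lra.
  - lra.
  - rewrite Hq. lra.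
  - rewrite Hr. ring.
  - replace (2 * (1/2 * atan kA)) with (atan kA) by field.
    rewrite Hck, <- HCn.
    replace (2*xA+3) with (2 + sqrt 5) by (unfold xA; field). field. lra.
  - replace (2 * (1/2 * atan kA)) with (atan kA) by field.
    rewrite cos_0, Hq.
    replace (sin (atan kA) * (1 * xA * (1 - xA))) with (sin (atan kA) * (xA * (1 - xA))) by ring.
    apply Rmult_lt_0_compat; auto. apply Rmult_lt_0_compat; lra.
  - lra.
Qed.

Lemma good_acos_a x w : 5*x^2-2*x-1 = 0 -> -1 < x < 1 -> x * qf x < 0 ->
  w * (2 - 5*x) = 1 -> -1 < w < 1 -> good PI (acos x) (1/2 * acos w) x.
Proof.
  intros Hr Hx Hxq Hw Hw1. destruct (quadB x Hr) as (Hq & HCn & _).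
  destruct (acos_facts w Hw1) as (Hc & Hs & Ha). pose proof PI_RGT_0.
  assert (qf x <> 0) by (intro E; rewrite E in Hxq; lra).
  apply mk_good; auto.
  - apply sin_PI.
  - lra.
  - rewrite Hr. ring.
  - replace (2 * (1/2 * acos w)) with (acos w) by field. rewrite Hc, <- HCn.
    replace (w * (Cn x * (2 - 5 * x))) with (Cn x * (w * (2 - 5*x))) by ring. rewrite Hw. ring.
  - replace (2 * (1/2 * acos w)) with (acos w) by field. rewrite cos_PI.
    replace (sin (acos w) * (-1 * x * qf x)) with (sin (acos w) * (- (x * qf x))) by ring.
    apply Rmult_lt_0_compat; lra.
  - lra.
Qed.

Lemma good_acos_b x w : 5*x^2-2*x-1 = 0 -> -1 < x < 1 -> x * qf x < 0 ->
  w * (2 - 5*x) = 1 -> -1 < w < 1 -> good 0 (acos x) (PI - 1/2 * acos w) x.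
Proof.
  intros Hr Hx Hxq Hw Hw1. destruct (quadB x Hr) as (Hq & HCn & _).
  destruct (acos_facts w Hw1) as (Hc & Hs & Ha). pose proof PI_RGT_0.
  assert (qf x <> 0) by (intro E; rewrite E in Hxq; lra).
  apply mk_good; auto.
  - apply sin_0.
  - lra.
  - rewrite Hr. ring.
  - replace (2 * (PI - 1/2 * acos w)) with (2*PI - acos w) by field.
    rewrite cos_2PI_minus, Hc, <- HCn.
    replace (w * (Cn x * (2 - 5 * x))) with (Cn x * (w * (2 - 5*x))) by ring. rewrite Hw. ring.
  - replace (2 * (PI - 1/2 * acos w)) with (2*PI - acos w) by field.
    rewrite sin_2PI_minus, cos_0.
    replace (- sin (acos w) * (1 * x * qf x)) with (sin (acos w) * (- (x * qf x))) by ring.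
    apply Rmult_lt_0_compat; lra.
  - lra.
Qed.

Lemma wB_facts : (1/(1 - sqrt 6)) * (2 - 5*xB) = 1 /\ -1 < 1/(1 - sqrt 6) < 1.
Proof.
  destruct xB_facts as (_ & _ & E). destruct sqrt6_facts as [H6 [H61 H62]].
  rewrite E. split; [field; lra|].
  set (d := 1 - sqrt 6). assert (d < -1) by (unfold d; lra).
  assert (d * (1/d) = 1) by (field; lra). set (w := 1/d) in *. split; nra.
Qed.
Lemma wC_facts : (1/(1 + sqrt 6)) * (2 - 5*xC) = 1 /\ -1 < 1/(1 + sqrt 6) < 1.
Proof.
  destruct xC_facts as (_ & _ & E). destruct sqrt6_facts as [H6 [H61 H62]].
  rewrite E. split; [field; lra|].
  set (d := 1 + sqrt 6). assert (1 < d) by (unfold d; lra).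
  assert (d * (1/d) = 1) by (field; lra). set (w := 1/d) in *. split; nra.
Qed.

Lemma qB_neg : xB * qf xB < 0.
Proof.
  destruct xB_facts as (Hr & Hb & _). destruct (quadB xB Hr) as (Hq & _).
  assert (qf xB < 0) by lra. nra.
Qed.
Lemma qC_neg : xC * qf xC < 0.
Proof.
  destruct xC_facts as (Hr & Hb & _). destruct (quadB xC Hr) as (Hq & _).
  assert (0 < qf xC) by lra. nra.
Qed.

Lemma goodP3a : good PI (acos xB) (1/2 * acos (1/(1 - sqrt 6))) xB.
Proof.
  destruct xB_facts as (Hr & Hb & _). destruct wB_facts as [Hw Hw1].
  apply good_acos_a; auto; try lra. apply qB_neg.
Qed.
Lemma goodP3b : good 0 (acos xB) (PI - 1/2 * acos (1/(1 - sqrt 6))) xB.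
Proof.
  destruct xB_facts as (Hr & Hb & _). destruct wB_facts as [Hw Hw1].
  apply good_acos_b; auto; try lra. apply qB_neg.
Qed.
Lemma goodP4a : good PI (acos xC) (1/2 * acos (1/(1 + sqrt 6))) xC.
Proof.
  destruct xC_facts as (Hr & Hb & _). destruct wC_facts as [Hw Hw1].
  apply good_acos_a; auto; try lra. apply qC_neg.
Qed.
Lemma goodP4b : good 0 (acos xC) (PI - 1/2 * acos (1/(1 + sqrt 6))) xC.
Proof.
  destruct xC_facts as (Hr & Hb & _). destruct wC_facts as [Hw Hw1].
  apply good_acos_b; auto; try lra. apply qC_neg.
Qed.

Lemma good_dom O a b x : good O a b x -> dom (O,a,b).
Proof. intros (_ & HO & Ha & _ & Hb & _). unfold dom; simpl. auto. Qed.

Lemma P1_facts O : -PI < O <= PI -> cos O = 0 ->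
  critical F (O, PI/2, PI/2) /\ F (O, PI/2, PI/2) = 1/4 /\ saddle F (O, PI/2, PI/2).
Proof.
  intros HO Hc.
  assert (Hs : sin O * sin O = 1) by (pose proof (sin2_cos2 O); unfold Rsqr in H; rewrite Hc in H; lra).
  assert (E : 2 * (PI/2) = PI) by field.
  assert (Hcrit : critical F (O, PI/2, PI/2)).
  { intros i Hi. destruct i as [|[|[|i]]]; [| | |lia].
    - rewrite pF0. unfold D0. rewrite E, sin_PI. field.
    - rewrite pF1. unfold D1. rewrite E, sin_PI, cos_PI2, Hc. field.
    - rewrite pF2. unfold D2. rewrite E, sin_PI, Hc. field. }
  split; [exact Hcrit|split].
  - rewrite F_G. unfold G. rewrite E, cos_PI, sin_PI, cos_PI2. field.
  - apply saddle02; auto.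
    + rewrite H10, E, sin_PI. field.
    + rewrite H12, E, cos_PI2, Hc. field.
    + rewrite H20, H02. reflexivity.
    + rewrite H00, H22, H02, E, sin_PI, cos_PI, sin_PI2, cos_PI2, Hc.
      replace (0 * 1 * (1 - 0) * 0 / 4 * ((-4 * -1 * (1 - 3 * 0 ^ 2) + 8 * 0 * 1 * (1 - 0) * 0) / 8) -
        sin O * 1 * (1 - 0) * -1 / 2 * (sin O * 1 * (1 - 0) * -1 / 2)) with (- (sin O * sin O) / 4) by field.
      rewrite Hs. lra.
Qed.

Lemma classify O a b : dom (O,a,b) -> critical F (O,a,b) ->
  (O = PI/2 /\ a = PI/2 /\ b = PI/2) \/ (O = -(PI/2) /\ a = PI/2 /\ b = PI/2) \/
  good O a b (cos a).
Proof.
  intros (HO & Ha & Hb) Hc. simpl in *.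
  pose proof PI_RGT_0.
  assert (Hs : 0 < sin a) by (apply sin_gt_0; lra).
  pose proof (sin_a_sq a) as Hss.
  assert (Hx : -1 < cos a < 1) by (split; nra).
  pose proof (Hc 0%nat ltac:(lia)) as E0. pose proof (Hc 1%nat ltac:(lia)) as E1.
  pose proof (Hc 2%nat ltac:(lia)) as E2.
  rewrite pF0 in E0. rewrite pF1 in E1. rewrite pF2 in E2. unfold D0, D1, D2 in *.
  assert (E0' : sin O * (sin a * (1 - cos a)) * sin (2*b) = 0) by lra.
  apply Rmult_integral in E0'. destruct E0' as [E0'|E0'].
  - apply Rmult_integral in E0'. destruct E0' as [E0'|E0']; [|exfalso; nra].
    right; right.
    pose proof (cosO_sq O E0') as Hcc.
    assert (HCS : cos (2*b) * cos (2*b) + sin (2*b) * sin (2*b) = 1)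
      by (pose proof (sin2_cos2 (2*b)); unfold Rsqr in H0; lra).
    destruct (crit_alg (cos a) (sin a) (cos O) (cos (2*b)) (sin (2*b)) Hss Hs Hx Hcc HCS)
      as (Hq & HC & HS & Hr); try lra.
    unfold good. repeat split; auto; lra.
  - assert (Hb2 : b = PI/2).
    { assert (sin (2*b - PI) = 0) by (rewrite sin_minus, sin_PI, cos_PI, E0'; ring).
      apply sin0_eq in H0; lra. }
    subst b. replace (2*(PI/2)) with PI in * by field.
    rewrite sin_PI, cos_PI in *.
    assert (HcO : cos O = 0).
    { assert (cos O * (sin a * (1 - cos a)) = 0) by lra.
      apply Rmult_integral in H0. destruct H0; [auto|exfalso; nra]. }
    rewrite HcO in E1.
    assert (Hca : cos a = 0).
    { assert (cos a * sin a = 0) by lra. apply Rmult_integral in H0. destruct H0; [auto|lra]. }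
    assert (a = PI/2) by (destruct (cosO_cases a) as [E|E]; auto; lra).
    destruct (cosO_cases O HO HcO) as [E|E]; [left|right; left]; auto.
Qed.

Lemma value_B : F (PI, acos xB, 1/2 * acos (1/(1 - sqrt 6))) = 3/50 * (9 - sqrt 6).
Proof.
  rewrite (good_value _ _ _ _ goodP3a).
  destruct xB_facts as (Hr & Hb & _). destruct (quadB xB Hr) as (Hq & _ & _ & HV).
  replace (sqrt 6) with (5*xB - 1) by (unfold xB; field).
  replace (pV xB) with ((312 - 696*xB)/125) by lra.
  replace (qf xB) with ((2 - 6*xB)/5) by lra.
  replace (312 - 696*xB) with (60*(2-xB)*(2-6*xB)) by nra.
  field. lra.
Qed.

Lemma value_Bb : F (0, acos xB, PI - 1/2 * acos (1/(1 - sqrt 6))) = 3/50 * (9 - sqrt 6).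
Proof.
  rewrite (good_value _ _ _ _ goodP3b).
  destruct xB_facts as (Hr & Hb & _). destruct (quadB xB Hr) as (Hq & _ & _ & HV).
  replace (sqrt 6) with (5*xB - 1) by (unfold xB; field).
  replace (pV xB) with ((312 - 696*xB)/125) by lra.
  replace (qf xB) with ((2 - 6*xB)/5) by lra.
  replace (312 - 696*xB) with (60*(2-xB)*(2-6*xB)) by nra.
  field. lra.
Qed.
Lemma value_C O b : good O (acos xC) b xC -> F (O, acos xC, b) = 3/50 * (9 + sqrt 6).
Proof.
  intro Hg. rewrite (good_value _ _ _ _ Hg).
  destruct xC_facts as (Hr & Hb & _). destruct (quadB xC Hr) as (Hq & _ & _ & HV).
  replace (sqrt 6) with (1 - 5*xC) by (unfold xC; field).
  replace (pV xC) with ((312 - 696*xC)/125) by lra.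
  replace (qf xC) with ((2 - 6*xC)/5) by lra.
  replace (312 - 696*xC) with (60*(2-xC)*(2-6*xC)) by nra.
  field. lra.
Qed.
Lemma value_A O b : good O (acos xA) b xA -> F (O, acos xA, b) = 1/4.
Proof.
  intro Hg. rewrite (good_value _ _ _ _ Hg).
  destruct xA_facts as (Hr & Hb). destruct (quadA xA Hr) as (Hq & _ & _ & HV).
  rewrite HV, Hq. field. lra.
Qed.

Lemma saddle_A O b : good O (acos xA) b xA -> saddle F (O, acos xA, b).
Proof.
  intro Hg. apply (good_saddle _ _ _ xA Hg).
  destruct xA_facts as (Hr & Hb). destruct (quadA xA Hr) as (_ & _ & Hd & _).
  rewrite Hd. lra.
Qed.
Lemma saddle_B O b : good O (acos xB) b xB -> saddle F (O, acos xB, b).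
Proof.
  intro Hg. apply (good_saddle _ _ _ xB Hg).
  destruct xB_facts as (Hr & Hb & _). destruct (quadB xB Hr) as (_ & _ & Hd & _).
  lra.
Qed.

Lemma F_max p : F p <= 3/50 * (9 + sqrt 6).
Proof.
  destruct p as [[O a] b]. rewrite F_G. unfold G.
  destruct sqrt6_facts as [H6 _].
  apply alg_max; auto.
  - apply sqrt_pos.
  - apply sin_a_sq.
  - pose proof (sin2_cos2 (2*b)). unfold Rsqr in H. lra.
  - pose proof (sin2_cos2 O). unfold Rsqr in H. pose proof (Rle_0_sqr (sin O)). unfold Rsqr in H0. lra.
Qed.

Lemma crit_good O a b x : good O a b x -> critical F (O,a,b).
Proof. intro Hg. apply (good_facts _ _ _ _ Hg). Qed.

Theorem lemma1 :
  (* the eight listed points lie in the domain *)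
  (dom P1a /\ dom P1b /\ dom P2a /\ dom P2b /\
   dom P3a /\ dom P3b /\ dom P4a /\ dom P4b) /\
  (* they are exactly the critical points of L1 in the domain *)
  (forall p : pt, dom p ->
     (critical F p <->
      p = P1a \/ p = P1b \/ p = P2a \/ p = P2b \/
      p = P3a \/ p = P3b \/ p = P4a \/ p = P4b)) /\
  (* 1. *)
  F P1a = 1/4 /\ F P1b = 1/4 /\ saddle F P1a /\ saddle F P1b /\
  (* 2. *)
  F P2a = 1/4 /\ F P2b = 1/4 /\ saddle F P2a /\ saddle F P2b /\
  (* 3. *)
  F P3a = 3/50 * (9 - sqrt 6) /\ F P3b = 3/50 * (9 - sqrt 6) /\
  saddle F P3a /\ saddle F P3b /\
  (* 4. *)
  F P4a = 3/50 * (9 + sqrt 6) /\ F P4b = 3/50 * (9 + sqrt 6) /\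
  (forall p : pt, dom p -> F p <= F P4a) /\
  (forall p : pt, dom p -> F p <= F P4b).
Proof.
  pose proof PI_RGT_0 as HPI.
  assert (HO1 : -PI < PI/2 <= PI) by lra. assert (HO2 : -PI < -(PI/2) <= PI) by lra.
  assert (Hc1 : cos (PI/2) = 0) by apply cos_PI2.
  assert (Hc2 : cos (-(PI/2)) = 0) by (rewrite cos_neg; apply cos_PI2).
  destruct (P1_facts _ HO1 Hc1) as (C1 & V1 & S1).
  destruct (P1_facts _ HO2 Hc2) as (C2 & V2 & S2).
  pose proof goodP2a as G2a. pose proof goodP2b as G2b.
  pose proof goodP3a as G3a. pose proof goodP3b as G3b.
  pose proof goodP4a as G4a. pose proof goodP4b as G4b.
  assert (V4a : F P4a = 3/50 * (9 + sqrt 6)) by exact (value_C _ _ G4a).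
  assert (V4b : F P4b = 3/50 * (9 + sqrt 6)) by exact (value_C _ _ G4b).
  split; [|split].
  - assert (D1 : dom P1a) by (unfold dom, P1a; simpl; lra).
    assert (D2 : dom P1b) by (unfold dom, P1b; simpl; lra).
    repeat split; try apply D1; try apply D2;
      first [ apply (good_dom _ _ _ _ G2a) | apply (good_dom _ _ _ _ G2b)
            | apply (good_dom _ _ _ _ G3a) | apply (good_dom _ _ _ _ G3b)
            | apply (good_dom _ _ _ _ G4a) | apply (good_dom _ _ _ _ G4b) ].
  - intros [[O a] b] Hd. split.
    + intro Hc. destruct (classify O a b Hd Hc) as [(-> & -> & ->)|[(-> & -> & ->)|Hg]].
      * left. reflexivity.
      * right; left. reflexivity.
      * pose proof Hg as Hg'. destruct Hg' as (Hs & HO & Ha & _ & _ & _ & Hr & _).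
        assert (Hx : -1 < cos a).
        { pose proof (sin_gt_0 a (proj1 Ha) (proj2 Ha)). pose proof (sin_a_sq a). nra. }
        destruct (root_cases _ Hx Hr) as [E|[E|E]]; rewrite E in Hg;
          destruct (sinO_cases O HO Hs) as [EO|EO]; subst O.
        -- do 3 right; left. exact (good_match _ _ _ _ _ _ _ Hg G2b eq_refl).
        -- do 2 right; left. exact (good_match _ _ _ _ _ _ _ Hg G2a eq_refl).
        -- do 5 right; left. exact (good_match _ _ _ _ _ _ _ Hg G3b eq_refl).
        -- do 4 right; left. exact (good_match _ _ _ _ _ _ _ Hg G3a eq_refl).
        -- do 7 right. exact (good_match _ _ _ _ _ _ _ Hg G4b eq_refl).
        -- do 6 right; left. exact (good_match _ _ _ _ _ _ _ Hg G4a eq_refl).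
    + intros [E|[E|[E|[E|[E|[E|[E|E]]]]]]]; rewrite E.
      * exact C1.
      * exact C2.
      * exact (crit_good _ _ _ _ G2a).
      * exact (crit_good _ _ _ _ G2b).
      * exact (crit_good _ _ _ _ G3a).
      * exact (crit_good _ _ _ _ G3b).
      * exact (crit_good _ _ _ _ G4a).
      * exact (crit_good _ _ _ _ G4b).
  - split; [exact V1|]. split; [exact V2|]. split; [exact S1|]. split; [exact S2|].
    split; [exact (value_A _ _ G2a)|]. split; [exact (value_A _ _ G2b)|].
    split; [exact (saddle_A _ _ G2a)|]. split; [exact (saddle_A _ _ G2b)|].
    split; [exact value_B|]. split; [exact value_Bb|].
    split; [exact (saddle_B _ _ G3a)|]. split; [exact (saddle_B _ _ G3b)|].
    split; [exact V4a|]. split; [exact V4b|].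
    split; intros p _; [rewrite V4a|rewrite V4b]; apply F_max.
Qed.
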